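(* Let $X$ be a compact metric space and let $f\colon X\to X$ be a homeomorphism. If there exists a Borel probability measure on $X$ which is inner-distal with respect to $f$, then there exists an $f$-invariant Borel probability measure on $X$ which is inner-distal with respect to $f$.
   Context: For a homeomorphism $f\colon X\to X$ of a metric space $(X,d)$, the proximal cell of $x$ is $\mathcal{P}(x)=\{y\in X\colon \inf_{n\in\mathbb{Z}} d(f^n(x),f^n(y))=0\}$. A Borel probability measure $\mu$ is inner-distal with respect to $f$ if $\mu(\operatorname{Int}\mathcal{P}(x))=0$ for every $x\in X$. It is $f$-invariant if $\mu(f^{-1}(A))=\mu(A)$ for every Borel set $A$. *)

(* Defs.v *)
From HB Require Import structures.
From mathcomp Require Import all_boot all_order all_algebra.
From mathcomp Require Import all_classical all_reals all_analysis.
Set Implicit Arguments. Unset Strict Implicit. Unset Printing Implicit Defensive.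
Import Order.TTheory GRing.Theory Num.Theory.
Local Open Scope classical_set_scope.
Local Open Scope ring_scope.

(* Pointed metric spaces (measurable types in MathComp-Analysis must be
   pointed; harmless here since a probability measure forces X nonempty). *)
#[short(type="pointedMetricType")]
HB.structure Definition PointedMetric (K : numDomainType) :=
  { M of PseudoPointedMetric K M & PseudoMetric_isMetric K M }.

Notation borel X := (g_sigma_algebraType (@open X)).

Definition homeomorphism_with (X : topologicalType) (f g : X -> X) : Prop :=
  [/\ cancel f g, cancel g f, continuous f & continuous g].

Definition iterz (X : Type) (f g : X -> X) (n : int) : X -> X :=
  match n with
  | Posz k => iter k f
  | Negz k => iter k.+1 g
  end.

Definition proximal_cell (R : realType) (X : pointedMetricType R) (f g : X -> X)
    (x : X) : set X :=
  [set y | inf (range (fun n : int => mdist (iterz f g n x) (iterz f g n y))) = 0].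

Definition inner_distal (R : realType) (X : pointedMetricType R) (f g : X -> X)
    (mu : set (borel X) -> \bar R) : Prop :=
  forall x : X, mu (interior (proximal_cell f g x)) = 0%E.

Definition f_invariant (R : realType) (X : pointedMetricType R) (f : X -> X)
    (mu : set (borel X) -> \bar R) : Prop :=
  forall A : set (borel X), measurable A -> mu (f @^-1` A) = mu A.

(* Main.v *)
Set Warnings "-all".
Require Import Defs.
From HB Require Import structures.
From mathcomp Require Import all_boot all_order all_algebra.
From mathcomp Require Import all_classical all_reals all_analysis.
From mathcomp Require Import lra.
Set Implicit Arguments. Unset Strict Implicit. Unset Printing Implicit Defensive.
Import Order.TTheory GRing.Theory Num.Theory.
Local Open Scope classical_set_scope.
Local Open Scope ring_scope.
From mathcomp Require Import zify.
Section ulim.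
Variable R : realType.
Variable G : set_system nat.
Hypothesis GU : UltraFilter G.
Hypothesis Ginf : forall N, G [set n | (N <= n)%N].

Definition uconv (s : nat -> R) (L : R) :=
  forall e : R, 0 < e -> G [set n | `|s n - L| < e].
Definition ulim (s : nat -> R) : R := sup [set t | G [set n | t <= s n]].

Lemma uconvE s L e : uconv s L -> 0 < e -> G [set n | L - e < s n < L + e].
Proof.
move=> h e0; apply: filterS (h e e0) => n /=.
by rewrite ltr_norml => /andP[h1 h2]; apply/andP; split; lra.
Qed.

Lemma ulimP s M : (forall n, 0 <= s n <= M) -> uconv s (ulim s).
Proof.
move=> sM.
set E := [set t | G [set n | t <= s n]].
have E0 : E 0.
  rewrite /E /=; apply: filterS (@filterT _ G _) => n _.
  by case/andP: (sM n).
have Eub : ubound E M.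
  move=> t Et; rewrite leNgt; apply/negP => Mt.
  have := filter_ex Et; case=> n /= tn; case/andP: (sM n) => _ h; lra.
have hs : has_sup E by split; [exists 0 | exists M].
have uE : ulim s = sup E by [].
move=> e e0; rewrite uE.
have G1 : G [set n | sup E - e < s n].
  have [t Et lt] := sup_adherent e0 hs.
  by apply: filterS Et => n /= h; lra.
have G2 : G [set n | s n < sup E + e].
  case: (in_ultra_setVsetC [set n | s n < sup E + e] GU) => // H.
  have : E (sup E + e).
    by apply: filterS H => n /=; rewrite ltNge => /negP/negbNE.
  move/(sup_upper_bound hs); lra.
apply: filterS (filterI G1 G2) => n [h1 h2] /=.
move: h1 h2 => /= h1 h2.
by rewrite ltr_norml; apply/andP; split; lra.
Qed.

Lemma uconv_uniq s a b : uconv s a -> uconv s b -> a = b.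
Proof.
move=> ha hb.
case: (ltgtP a b) => // ab; exfalso.
- have e0 : 0 < (b - a) / 2 by lra.
  have [n [/= h1 h2]] := filter_ex (filterI (uconvE ha e0) (uconvE hb e0)).
  move/andP: h1 => [? ?]; move/andP: h2 => [? ?]; lra.
- have e0 : 0 < (a - b) / 2 by lra.
  have [n [/= h1 h2]] := filter_ex (filterI (uconvE ha e0) (uconvE hb e0)).
  move/andP: h1 => [? ?]; move/andP: h2 => [? ?]; lra.
Qed.

Lemma uconv_add s t a b : uconv s a -> uconv t b -> uconv (fun n => s n + t n) (a + b).
Proof.
move=> ha hb e e0.
have e2 : 0 < e / 2 by lra.
apply: filterS (filterI (uconvE ha e2) (uconvE hb e2)) => n [/= h1 h2].
move/andP: h1 => [? ?]; move/andP: h2 => [? ?].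
by rewrite ltr_norml; apply/andP; split; lra.
Qed.

Lemma uconv_le s t a b : (forall n, s n <= t n) -> uconv s a -> uconv t b -> a <= b.
Proof.
move=> st ha hb; rewrite leNgt; apply/negP => ba.
have e0 : 0 < (a - b) / 2 by lra.
have [n [/= h1 h2]] := filter_ex (filterI (uconvE ha e0) (uconvE hb e0)).
move/andP: h1 => [? ?]; move/andP: h2 => [? ?]; have := st n; lra.
Qed.

Lemma uconv_cofin s L :
  (forall e : R, 0 < e -> exists N, forall n, (N <= n)%N -> `|s n - L| < e) -> uconv s L.
Proof.
move=> h e e0; have [N hN] := h e e0.
by apply: filterS (Ginf N) => n /= /hN.
Qed.

Lemma uconv_ext s t a : uconv s a -> (forall n, s n = t n) -> uconv t a.
Proof. by move=> h st e e0; apply: filterS (h e e0) => n /=; rewrite st. Qed.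

End ulim.
Section dyn.
Variables (R : realType) (X : pointedMetricType R) (f g : X -> X).
Hypothesis hfg : homeomorphism_with f g.
Variable mu : probability (borel X) R.

Let fK : cancel f g. Proof. by case: hfg. Qed.
Let gK : cancel g f. Proof. by case: hfg. Qed.
Let fc : continuous f. Proof. by case: hfg. Qed.
Let gc : continuous g. Proof. by case: hfg. Qed.

Definition pre (i : nat) (A : set X) : set X := (iter i f) @^-1` A.

Lemma open_pre i A : open A -> open (pre i A).
Proof.
elim: i A => [|i IH] A oA //=.
by apply: (IH (f @^-1` A)); exact: (proj1 (continuousP f) fc).
Qed.

Lemma mopen (A : set X) : open A -> measurable (A : set (borel X)).
Proof. by move=> oA; apply: sub_sigma_algebra. Qed.

Definition m (A : set X) : R := fine (mu (A : set (borel X))).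

Lemma mE A : open A -> mu (A : set (borel X)) = (m A)%:E.
Proof.
move=> oA; rewrite /m fineK //; apply: fin_num_measure; exact: mopen.
Qed.

Lemma m_ge0 A : 0 <= m A.
Proof. by rewrite /m; apply: fine_ge0; exact: measure_ge0. Qed.

Lemma m_le1 A : open A -> m A <= 1.
Proof.
move=> oA; have := probability_le1 mu (mopen oA).
by rewrite mE // lee_fin.
Qed.

Lemma m_le A B : open A -> open B -> A `<=` B -> m A <= m B.
Proof.
move=> oA oB AB.
have : (mu (A : set (borel X)) <= mu (B : set (borel X)))%E.
  by apply: le_measure => //; apply/mem_set; exact: mopen.
by rewrite !mE // lee_fin.
Qed.

Lemma m_add A B : open A -> open B -> A `&` B = set0 -> m (A `|` B) = m A + m B.
Proof.
move=> oA oB AB.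
have : mu (A `|` B : set (borel X)) = (mu (A : set (borel X)) + mu (B : set (borel X)))%E.
  by apply: measureU => //; exact: mopen.
rewrite !mE //; last exact: openU.
by move=> [].
Qed.

Lemma m_subadd A B : open A -> open B -> m (A `|` B) <= m A + m B.
Proof.
move=> oA oB.
have : (mu (A `|` B : set (borel X)) <= mu (A : set (borel X)) + mu (B : set (borel X)))%E.
  by apply: measureU2 => //; exact: mopen.
by rewrite !mE //; last exact: openU.
Qed.

Lemma m0 : m set0 = 0.
Proof. by rewrite /m measure0. Qed.

Lemma mT : m setT = 1.
Proof. by rewrite /m probability_setT. Qed.

Definition avg (A : set X) (n : nat) : R :=
  (n.+1%:R)^-1 * \sum_(i < n.+1) m (pre i A).

Lemma avg_bd A n : open A -> 0 <= avg A n <= 1.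
Proof.
move=> oA; rewrite /avg; apply/andP; split.
  by apply: mulr_ge0; [rewrite invr_ge0 ler0n|apply: sumr_ge0 => i _; exact: m_ge0].
rewrite ler_pdivrMl ?ltr0n // mulr1.
apply: (@le_trans _ _ (\sum_(i < n.+1) (1 : R))).
  by apply: ler_sum => i _; apply: m_le1; exact: open_pre.
by rewrite sumr_const card_ord.
Qed.


Lemma iterz_f n x : iterz f g n (f x) = iterz f g (n + 1) x.
Proof.
case: n => k.
  by rewrite (_ : (Posz k + 1) = Posz k.+1)%R /= -?iterSr //; lia.
case: k => [|k].
  by rewrite (_ : (Negz 0 + 1 = 0)%R) //= fK.
rewrite (_ : (Negz k.+1 + 1 = Negz k)%R); last by lia.
by rewrite /=; congr g; rewrite -iterS iterSr fK.
Qed.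

Lemma iterz_g n x : iterz f g n (g x) = iterz f g (n - 1) x.
Proof.
case: n => k.
  case: k => [|k]; first by rewrite (_ : (Posz 0 - 1 = Negz 0)%R).
  rewrite (_ : (Posz k.+1 - 1 = Posz k)%R); last by lia.
  by rewrite /iterz iterSr gK.
have -> : (Negz k - 1 = Negz k.+1)%R by lia.
by rewrite /iterz [in RHS]iterSr.
Qed.

Lemma proxE x : proximal_cell f g (g x) = f @^-1` proximal_cell f g x.
Proof.
have E y : range (fun n : int => mdist (iterz f g n (g x)) (iterz f g n y)) =
           range (fun n : int => mdist (iterz f g n x) (iterz f g n (f y))).
  apply/seteqP; split => _ [n _ <-].
  - by exists (n - 1) => //; rewrite iterz_f iterz_g subrK.
  - by exists (n + 1) => //; rewrite iterz_g iterz_f addrK.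
by apply/seteqP; split => y /=; rewrite /proximal_cell /= E.
Qed.

Lemma pre_interior (S : set X) : f @^-1` (interior S) = interior (f @^-1` S).
Proof.
apply/seteqP; split => y /=.
- by move=> hS; exact: (@fc y S hS).
- move=> hS; have : nbhs (g (f y)) (f @^-1` S) by rewrite fK.
  move/(@gc (f y)) => h.
  have -> : S = g @^-1` (f @^-1` S) by apply/seteqP; split => z /=; rewrite gK.
  exact: h.
Qed.

Lemma pre_intP i x :
  pre i (interior (proximal_cell f g x)) = interior (proximal_cell f g (iter i g x)).
Proof.
elim: i x => [|i IH] x //.
rewrite (_ : pre i.+1 _ = pre i (f @^-1` interior (proximal_cell f g x))) //.
by rewrite pre_interior -proxE IH iterSr.
Qed.

Variable G : set_system nat.
Hypothesis GU : UltraFilter G.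
Hypothesis Ginf : forall N, G [set n | (N <= n)%N].

Definition lam (A : set X) : R := ulim G (avg A).

Lemma lamP A : open A -> uconv G (avg A) (lam A).
Proof. by move=> oA; apply: (@ulimP _ _ GU _ 1) => n; exact: avg_bd. Qed.

Lemma uconv_const (c : R) : uconv G (fun _ => c) c.
Proof. by move=> e e0; apply: filterS (@filterT _ G _) => n _ /=; rewrite subrr normr0. Qed.

Lemma lam_const A (c : R) : open A -> (forall n, avg A n = c) -> lam A = c.
Proof.
move=> oA h; apply: (uconv_uniq GU (lamP oA)).
exact: (uconv_ext GU (uconv_const c) (fun n => esym (h n))).
Qed.

Lemma lam0 : lam set0 = 0.
Proof.
apply: lam_const; first exact: open0.
move=> n; rewrite /avg big1 ?mulr0 // => i _.
by rewrite /pre preimage_set0 m0.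
Qed.

Lemma lamT : lam setT = 1.
Proof.
apply: lam_const; first exact: openT.
move=> n; rewrite /avg (eq_bigr (fun _ => 1)); last by move=> i _; rewrite /pre preimage_setT mT.
by rewrite sumr_const card_ord mulVf // pnatr_eq0.
Qed.

Lemma lam_ge0 A : open A -> 0 <= lam A.
Proof.
move=> oA; apply: (uconv_le GU _ (uconv_const 0) (lamP oA)) => n.
by case/andP: (avg_bd n oA).
Qed.

Lemma lam_le1 A : open A -> lam A <= 1.
Proof.
move=> oA; apply: (uconv_le GU _ (lamP oA) (uconv_const 1)) => n.
by case/andP: (avg_bd n oA).
Qed.

Lemma lam_le A B : open A -> open B -> A `<=` B -> lam A <= lam B.
Proof.
move=> oA oB AB; apply: (uconv_le GU _ (lamP oA) (lamP oB)) => n.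
rewrite /avg ler_wpM2l ?invr_ge0 ?ler0n //; apply: ler_sum => i _.
by apply: m_le; try exact: open_pre; move=> x /= /AB.
Qed.

Lemma lam_add A B : open A -> open B -> A `&` B = set0 -> lam (A `|` B) = lam A + lam B.
Proof.
move=> oA oB AB; have oAB := openU oA oB.
apply: (uconv_uniq GU (lamP oAB)).
refine (uconv_ext GU (uconv_add GU (lamP oA) (lamP oB)) _) => n.
rewrite /avg -mulrDr -big_split /=; congr (_ * _); apply: eq_bigr => i _.
rewrite -m_add //; try exact: open_pre.
by rewrite /pre -preimage_setI AB preimage_set0.
Qed.

Lemma lam_subadd A B : open A -> open B -> lam (A `|` B) <= lam A + lam B.
Proof.
move=> oA oB; have oAB := openU oA oB.
apply: (uconv_le GU _ (lamP oAB) (uconv_add GU (lamP oA) (lamP oB))) => n.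
rewrite /avg -mulrDr -big_split /= ler_wpM2l ?invr_ge0 ?ler0n //.
apply: ler_sum => i _; exact: m_subadd (open_pre _ oA) (open_pre _ oB).
Qed.

Lemma lam_inv A : open A -> lam (f @^-1` A) = lam A.
Proof.
move=> oA; have oA' : open (f @^-1` A) by exact: (proj1 (continuousP f) fc).
apply: (uconv_uniq GU (lamP oA')).
set d := fun n => avg (f @^-1` A) n - avg A n.
have dc : uconv G d 0.
  refine (uconv_cofin GU Ginf _) => e e0.
  exists (Num.Def.trunc (e^-1)) => n Nn.
  rewrite subr0 /d /avg -mulrBr -sumrB.
  rewrite (eq_bigr (fun i : 'I_n.+1 => m (pre i.+1 A) - m (pre i A))) //.
  rewrite -(big_mkord xpredT (fun i => m (pre i.+1 A) - m (pre i A))) telescope_sumr //.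
  rewrite normrM ger0_norm ?invr_ge0 ?ler0n //.
  have h1 : `|m (pre n.+1 A) - m (pre 0 A)| <= 1.
    have := m_ge0 (pre n.+1 A); have := m_le1 (open_pre n.+1 oA).
    have := m_ge0 (pre 0 A); have := m_le1 (open_pre 0 oA).
    by rewrite ler_norml => *; apply/andP; split; lra.
  have h2 : (n.+1%:R)^-1 < e.
    have := truncnS_gt (e^-1).
    have : ((Num.Def.trunc e^-1).+1%:R <= n.+1%:R :> R) by rewrite ler_nat.
    set N := ((Num.Def.trunc e^-1).+1%:R : R) => h3 h4.
    have n0 : (0 < n.+1%:R :> R) by rewrite ltr0n.
    rewrite -[X in X < _]mul1r ltr_pdivrMr //.
    have : e * e^-1 = 1 by rewrite mulfV // gt_eqF.
    nra.
  apply: le_lt_trans h2.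
  by rewrite -[X in _ <= X]mulr1 ler_wpM2l // invr_ge0 ler0n.
rewrite -[X in uconv _ _ X]addr0.
refine (uconv_ext GU (uconv_add GU (lamP oA) dc) _) => n.
by rewrite /d addrC subrK.
Qed.

Hypothesis mu_distal : inner_distal f g mu.

Lemma lam_distal x : lam (interior (proximal_cell f g x)) = 0.
Proof.
apply: lam_const; first exact: open_interior.
move=> n; rewrite /avg big1 ?mulr0 // => i _.
by rewrite pre_intP /m mu_distal.
Qed.

End dyn.
Section construct.
Variables (R : realType) (X : pointedMetricType R) (L : set X -> R).
Hypothesis L0 : L set0 = 0.
Hypothesis LT : L setT = 1.
Hypothesis Lge0 : forall A, open A -> 0 <= L A.
Hypothesis Lle : forall A B, open A -> open B -> A `<=` B -> L A <= L B.
Hypothesis Ladd : forall A B, open A -> open B -> A `&` B = set0 ->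
  L (A `|` B) = L A + L B.
Hypothesis Lsub : forall A B, open A -> open B -> L (A `|` B) <= L A + L B.
Hypothesis cptX : compact [set: X].

Lemma mopen' (A : set X) : open A -> measurable (A : set (borel X)).
Proof. by move=> oA; apply: sub_sigma_algebra. Qed.

Local Open Scope ereal_scope.

Definition mu0 (A : set X) : \bar R := if `[< open A >] then (L A)%:E else +oo.

Lemma mu0_open A : open A -> mu0 A = (L A)%:E.
Proof. by move=> oA; rewrite /mu0 asboolT. Qed.
Lemma mu0_nopen A : ~ open A -> mu0 A = +oo.
Proof. by move=> oA; rewrite /mu0 asboolF. Qed.
Lemma mu0_0 : mu0 set0 = 0.
Proof. by rewrite mu0_open ?L0 //; exact: open0. Qed.
Lemma mu0_ge0 A : 0 <= mu0 A.
Proof.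
rewrite /mu0; case: asboolP => oA; [rewrite lee_fin; exact: Lge0|exact: leey].
Qed.

Definition nus : set (borel X) -> \bar R := @mu_ext _ (borel X) R mu0.

HB.instance Definition _ := isOuterMeasure.Build R (borel X) nus
  (@mu_ext0 _ (borel X) R mu0 mu0_0 mu0_ge0) (@mu_ext_ge0 _ (borel X) R mu0 mu0_ge0)
  (@le_mu_ext _ (borel X) R mu0) (@mu_ext_sigma_subadditive _ (borel X) R mu0 mu0_ge0).

Lemma nus_le (A : set X) : measurable (A : set (borel X)) -> nus A <= mu0 A.
Proof.
move=> mA; apply: ereal_inf_lbound.
exists (fun k => if k is 0%N then A else set0).
  split; first by move=> [|k] //; exact: measurable0.
  by move=> x Ax; exists 0%N.
rewrite (nneseries_split 0 1); last by move=> k _; exact: mu0_ge0.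
rewrite eseries0 ?adde0; last by move=> [|i] //= _ _; exact: mu0_0.
by rewrite add0n big_nat1.
Qed.

Lemma noopen_series (F : (set X)^nat) :
  ~ (forall k, open (F k)) -> \sum_(k <oo) mu0 (F k) = +oo.
Proof.
move=> h; have [k nk] : exists k, ~ open (F k).
  by apply: contrapT => h2; apply: h => k; apply: contrapT => h3; apply: h2; exists k.
rewrite (eseries_pinfty _ _ (mu0_nopen nk)) //.
by move=> n _; rewrite gt_eqF // (lt_le_trans _ (mu0_ge0 _)) // ltNy0.
Qed.

Lemma seq_bound (s : seq nat) : exists N, forall i, i \in s -> (i < N)%N.
Proof.
elim: s => [|a s [N hN]]; first by exists 0%N.
exists (maxn a.+1 N) => i; rewrite inE => /orP[/eqP ->|/hN]; first by rewrite leq_max leqnn.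
by move=> iN; rewrite leq_max iN orbT.
Qed.

Lemma Lcover (F : (set X)^nat) (oF : forall k, open (F k)) N (A : set X) :
  open A -> A `<=` \bigcup_(k in [set k | (k < N)%N]) F k ->
  (L A <= \sum_(k < N) L (F k))%R.
Proof.
elim: N A => [|N IH] A oA AF.
  rewrite big_ord0 -L0; apply: Lle => //; first exact: open0.
  by move=> x /AF [k /=].
set B := \bigcup_(k in [set k | (k < N)%N]) F k.
have oB : open B by apply: bigcup_open => k _.
rewrite big_ord_recr /=.
apply: (@le_trans _ _ (L (B `|` F N))).
  apply: Lle => //; first exact: openU.
  move=> x /AF [k /= kN Fk]; move: kN; rewrite ltnS leq_eqVlt => /orP[/eqP kN|kN].
    by right; rewrite -kN.
  by left; exists k.
apply: le_trans (Lsub oB (oF N)) _.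
by rewrite lerD2r; apply: IH.
Qed.

Lemma nusT : nus setT = 1.
Proof.
apply/eqP; rewrite eq_le; apply/andP; split.
  rewrite -LT -mu0_open; last exact: openT.
  by apply: nus_le; exact: measurableT.
apply: le_ereal_inf_tmp => _ [F [mF cF] <-].
have [oF|noF] := pselect (forall k, open (F k)); last by rewrite noopen_series // leey.
have [D' _ hD'] : finite_subset_cover setT F setT.
  move: cptX; rewrite compact_cover; apply; first by move=> i _; exact: oF.
  move=> x _.
  by have [k _ Fk] := cF x I; exists k.
have [N hN] := seq_bound (finmap.enum_fset D').
have : (L setT <= \sum_(k < N) L (F k))%R.
  apply: Lcover => //; first exact: openT.
  move=> x /hD' [k /= kD Fk]; exists k => //; exact: hN.
rewrite LT -lee_fin -sumEFin => h; apply: le_trans h _.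
rewrite (eq_bigr (fun k : 'I_N => mu0 (F k))); last by move=> k _; rewrite mu0_open.
rewrite -(big_mkord xpredT (fun k => mu0 (F k))).
by apply: nneseries_lim_ge => k _ _; exact: mu0_ge0.
Qed.

Definition sep (A B : set X) := exists2 r : R, (0 < r)%R &
  forall a b, A a -> B b -> ~ ball a r b.

Lemma sep_sub A B A' B' : A `<=` A' -> B `<=` B' -> sep A' B' -> sep A B.
Proof. by move=> AA BB [r r0 h]; exists r => // a b /AA Aa /BB Bb; exact: h. Qed.

Lemma nus_sep (A B : set X) : sep A B -> nus A + nus B <= nus (A `|` B).
Proof.
move=> [r r0 hAB]; apply: le_ereal_inf_tmp => _ [F [mF cF] <-].
have [oF|noF] := pselect (forall k, open (F k)); last by rewrite noopen_series // leey.
have r2 : (0 < r / 2)%R by rewrite divr_gt0.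
pose NA := \bigcup_(a in A) (ball a (r/2))°.
pose NB := \bigcup_(b in B) (ball b (r/2))°.
have oNA : open NA by apply: bigcup_open => a _; exact: open_interior.
have oNB : open NB by apply: bigcup_open => a _; exact: open_interior.
have dNAB : NA `&` NB = set0.
  apply/seteqP; split => // z [[a Aa /interior_subset az] [b Bb /interior_subset bz]].
  apply: (hAB a b Aa Bb); rewrite [r]splitr.
  exact: ball_triangle az (ball_sym bz).
have hA : nus A <= \sum_(k <oo) mu0 (F k `&` NA).
  apply: ereal_inf_lbound; exists (fun k => F k `&` NA) => //; split.
    by move=> k; apply: mopen'; exact: openI.
  move=> a Aa; have [k _ Fka] := cF a (or_introl Aa).
  by exists k => //; split => //; exists a => //; exact: nbhsx_ballx.
have hB : nus B <= \sum_(k <oo) mu0 (F k `&` NB).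
  apply: ereal_inf_lbound; exists (fun k => F k `&` NB) => //; split.
    by move=> k; apply: mopen'; exact: openI.
  move=> a Aa; have [k _ Fka] := cF a (or_intror Aa).
  by exists k => //; split => //; exists a => //; exact: nbhsx_ballx.
apply: le_trans (leeD hA hB) _.
rewrite -nneseriesD; try by move=> i _ _; exact: mu0_ge0.
apply: lee_nneseries => [i _ _|i _]; first by rewrite adde_ge0 // mu0_ge0.
rewrite !mu0_open //; try exact: openI.
rewrite -EFinD lee_fin -Ladd //; try exact: openI.
  by apply: Lle => //; [apply: openU; exact: openI| move=> x [[]|[]]].
apply/seteqP; split => // x [[_ ?] [_ ?]]; rewrite -dNAB; by split.
Qed.


Section cara.
Variable O : set X.
Hypothesis oO : open O.
Variable Y : set X.

Let r (n : nat) : R := (n.+1%:R)^-1.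
Let r_gt0 n : (0 < r n)%R. Proof. by rewrite invr_gt0 ltr0n. Qed.
Let r_le m n : (m <= n)%N -> (r n <= r m)%R.
Proof. by move=> mn; rewrite /r lef_pV2 ?posrE ?ltr0n // ler_nat ltnS. Qed.
Let r_lt m n : (m < n)%N -> (r n < r m)%R.
Proof. by move=> mn; rewrite /r ltf_pV2 ?posrE ?ltr0n // ltr_nat ltnS. Qed.

Let S n := Y `&` [set x | ball x (r n) `<=` O].
Let S_mono m n : (m <= n)%N -> S m `<=` S n.
Proof. by move=> mn x [Yx hx]; split => // z /(le_ball (r_le mn)) /hx. Qed.

Let S_cover : Y `&` O `<=` \bigcup_n S n.
Proof.
move=> x [Yx Ox].
have : nbhs x O by apply: open_nbhs_nbhs; split.
move/nbhs_ballP => [e /= e0 he].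
exists (Num.Def.trunc e^-1) => //; split => // z /(le_ball _) hz; apply: he; apply: hz.
apply: ltW; set N := Num.Def.trunc e^-1.
have hN : (e^-1 < N.+1%:R)%R := truncnS_gt _.
by rewrite /r -[e]invrK ltf_pV2 ?posrE ?invr_gt0 ?ltr0n.
Qed.

Let sep_SO n : sep (S n) (Y `&` ~` O).
Proof. by exists (r n) => // a b [_ ha] [_ nb] ab; exact: nb (ha b ab). Qed.

Let sep_SS p k : (p < k)%N -> sep (S p) (Y `&` ~` S k).
Proof.
move=> pk; exists (r p - r k)%R; first by rewrite subr_gt0 r_lt.
move=> a b [_ ha] [Yb nb] ab; apply: nb; split => // z bz; apply: ha.
by rewrite -[r p](subrK (r k)); exact: ball_triangle ab bz.
Qed.

Let D k := S k.+1 `&` ~` S k.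

Let cover_tail n : Y `&` O `<=` S n `|` \bigcup_j D (n + j)%N.
Proof.
move=> x /S_cover [m _ Smx].
suff : S n x \/ exists j, D (n + j)%N x.
  by case=> [h|[j h]]; [left|right; exists j].
elim: m Smx => [|m IH] Sm.
  by left; exact: S_mono (leq0n n) _ Sm.
have [Smx'|nSm] := pselect (S m x); first exact: IH.
case: (leqP n m) => nm.
  by right; exists (m - n)%N; rewrite subnKC.
by left; exact: S_mono nm _ Sm.
Qed.

Let cara1 n : nus (Y `&` O) <= nus (S n) + \sum_(n <= k <oo) nus (D k).
Proof.
have h1 := le_outer_measure nus _ _ (cover_tail n).
apply: (le_trans h1).
apply: (le_trans (outer_measureU2 nus (S n) (\bigcup_j D (n + j)%N))).
apply: leeD => //.
have h2 := outer_measure_sigma_subadditive nus (fun j => D (n + j)%N).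
apply: (le_trans h2).
rewrite -(@nneseries_addn R (fun k => nus (D k)) n); last by move=> i; exact: outer_measure_ge0.
by rewrite le_eqVlt; apply/orP; left; apply/eqP; apply: eq_eseriesr => j _; rewrite addnC.
Qed.

Let cara2 n : nus (S n) + nus (Y `&` ~` O) <= nus Y.
Proof.
apply: (le_trans (nus_sep (sep_SO n))).
by apply: le_outer_measure => x [[]|[]].
Qed.

Let nus_le1 A : nus A <= 1.
Proof. by rewrite -nusT; apply: le_outer_measure. Qed.

Let E m := \bigcup_(j in [set j | (j < m)%N]) D j.*2.
Let Od m := \bigcup_(j in [set j | (j < m)%N]) D j.*2.+1.

Let D_subS k : D k `<=` S k.+1. Proof. by move=> x []. Qed.
Let D_subC k : D k `<=` Y `&` ~` S k.
Proof. by move=> x [[Yx _] nx]. Qed.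

Let E_sub m : E m.+1 `<=` S m.*2.+1.
Proof.
move=> x [j /= jm /D_subS]; apply: S_mono.
by rewrite ltnS leq_double -ltnS.
Qed.

Let Od_sub m : Od m `<=` S m.*2.
Proof.
move=> x [j /= jm /D_subS]; apply: S_mono.
by rewrite -doubleS leq_double.
Qed.

Let claim m : \sum_(0 <= k < m.*2) nus (D k) <= nus (E m) + nus (Od m).
Proof.
elim: m => [|m IH].
  by rewrite big_geq // adde_ge0 // outer_measure_ge0.
rewrite doubleS !big_nat_recr //=.
have hE : nus (E m) + nus (D m.*2) <= nus (E m.+1).
  apply: (le_trans (nus_sep _)).
    case: m {IH} => [|m].
      by exists 1%R => // a b [j /= j0].
    apply: sep_sub (sep_SS (p:=m.*2.+1) (k:=m.+1.*2) _).
    - exact: E_sub.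
    - exact: D_subC.
    - by rewrite doubleS.
  apply: le_outer_measure => x [[j /= jm Dx]|Dx].
    by exists j => //=; exact: ltnW.
  by exists m => //=.
have hO : nus (Od m) + nus (D m.*2.+1) <= nus (Od m.+1).
  apply: (le_trans (nus_sep _)).
    apply: sep_sub (sep_SS (p:=m.*2) (k:=m.*2.+1) _).
    - exact: Od_sub.
    - exact: D_subC.
    - by [].
  apply: le_outer_measure => x [[j /= jm Dx]|Dx].
    by exists j => //=; exact: ltnW.
  by exists m => //=.
apply: (le_trans (leeD (leeD IH (le_refl _)) (le_refl _))).
rewrite -addeA addeACA.
exact: leeD hE hO.
Qed.

Let series_fin : \sum_(k <oo) nus (D k) < +oo.
Proof.
apply: (@le_lt_trans _ _ 2%:E); last by rewrite ltry.
apply: lime_le; first by apply: is_cvg_nneseries => k _ _; exact: outer_measure_ge0.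
apply: nearW => m.
have mm : (m <= m.*2)%N by rewrite -addnn leq_addr.
apply: (@le_trans _ _ (\sum_(0 <= k < m.*2) nus (D k))).
  rewrite (@big_cat_nat _ _ _ m 0 m.*2) //= leeDl //.
  by apply: sume_ge0 => k _; exact: outer_measure_ge0.
apply: (le_trans (claim m)).
by rewrite (_ : 2%:E = 1 + 1) ?leeD ?nus_le1 // -EFinD.
Qed.

Lemma cara_open : nus (Y `&` O) + nus (Y `&` ~` O) <= nus Y.
Proof.
apply/lee_addgt0Pr => e e0.
have tl := nneseries_tail_cvg series_fin (fun k _ => outer_measure_ge0 nus (D k)).
move/fine_cvgP: tl => [tfin tcv].
have tlt := @cvgr_dist_lt _ _ _ _ _ _ _ tcv _ e0.
have [n _ hn] := filterI tfin (tlt _).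
have [fn dn] := hn n (leqnn n).
have tn : \sum_(n <= k <oo) nus (D k) <= e%:E.
  rewrite -(fineK fn) lee_fin; move: dn; rewrite sub0r normrN => dn.
  exact: ltW (le_lt_trans (ler_norm _) dn).
apply: (le_trans (leeD (cara1 n) (le_refl (nus (Y `&` ~` O))))).
rewrite addeAC.
exact: leeD (cara2 n) tn.
Qed.

End cara.

Lemma borel_cara (A : set (borel X)) : measurable A -> nus.-caratheodory A.
Proof.
move=> mA.
have sC : sigma_algebra setT (nus.-caratheodory) :=
  sigma_algebra_measurable (caratheodory_type nus).
apply: (smallest_sub sC _ mA) => O oO.
apply: le_caratheodory_measurable => Y.
exact: cara_open.
Qed.

Definition nu (A : set (borel X)) : \bar R := nus A.
Lemma nu0 : nu set0 = 0. Proof. exact: outer_measure0. Qed.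
Lemma nu_ge0 A : 0 <= nu A. Proof. exact: outer_measure_ge0. Qed.
Lemma nu_sigma : semi_sigma_additive nu.
Proof.
move=> F mF tF mU.
exact: (@caratheodory_measure_sigma_additive R (borel X) nus F
  (fun n => borel_cara (mF n)) tF (borel_cara mU)).
Qed.

Definition nuM : measure (borel X) R :=
  HB.pack nu (isMeasure.Build _ _ _ nu nu0 nu_ge0 nu_sigma).

Definition nuP : probability (borel X) R :=
  HB.pack_for (probability (borel X) R) (Measure.sort nuM)
    (Measure_isProbability.Build _ _ _ (Measure.sort nuM) nusT).

Lemma nuPE A : nuP A = nus A. Proof. by []. Qed.


Section inv.
Variables (h k : X -> X).
Hypotheses (hk : cancel h k) (kh : cancel k h) (hc : continuous h) (kc : continuous k).
Hypothesis Linv : forall U, open U -> L (h @^-1` U) = L U.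

Let mu0_inv B : mu0 (h @^-1` B) = mu0 B.
Proof.
case: (pselect (open B)) => oB.
  rewrite !mu0_open //; first by rewrite Linv.
  exact: (proj1 (continuousP h) hc).
rewrite !mu0_nopen // => ohB; apply: oB.
have -> : B = k @^-1` (h @^-1` B) by apply/seteqP; split => x /=; rewrite kh.
exact: (proj1 (continuousP k) kc).
Qed.

Let meas_pre (B : set (borel X)) : measurable B -> measurable (h @^-1` B : set (borel X)).
Proof.
move=> mB.
have mh : measurable_fun setT (h : borel X -> borel X).
  apply: (@measurability _ _ (borel X) (borel X) setT h (@open X)); first by [].
  move=> _ [U oU <-]; rewrite setTI; apply: mopen'.
  exact: (proj1 (continuousP h) hc).
by have := mh measurableT B mB; rewrite setTI.
Qed.

Lemma nus_inv_le (A : set (borel X)) : nus (h @^-1` A) <= nus A.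
Proof.
rewrite /nus /mu_ext; apply: ereal_inf_le_tmp => _ [F [mF cF] <-].
exists (fun n => h @^-1` F n).
  split; first by move=> n; exact: meas_pre.
  by move=> x /cF [n _ Fn]; exists n.
by apply: eq_eseriesr => n _; rewrite mu0_inv.
Qed.
End inv.

End construct.

Unset Implicit Arguments.
Set Strict Implicit.

Theorem theorem2p14 (R : realType) (X : pointedMetricType R) (f g : X -> X) :
  compact [set: X] ->
  homeomorphism_with f g ->
  (exists mu : probability (borel X) R, inner_distal f g mu) ->
  exists nu : probability (borel X) R, f_invariant f nu /\ inner_distal f g nu.
Proof.
move=> cpt hfg [mu md].
have [fK gK fc gc] := hfg.
have [G [GU sub]] := @ultraFilterLemma nat \oo _.
have Ginf : forall N, G [set n | (N <= n)%N] by move=> N; apply: sub; exists N.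
pose L := lam f mu G.
have L0 : L set0 = 0 := lam0 hfg mu GU.
have LT : L setT = 1 := lamT hfg mu GU.
have Lge0 : forall A, open A -> 0 <= L A := fun A => lam_ge0 hfg mu GU (A:=A).
have Lle : forall A B, open A -> open B -> A `<=` B -> L A <= L B :=
  fun A B => lam_le hfg mu GU (A:=A) (B:=B).
have Ladd : forall A B, open A -> open B -> A `&` B = set0 -> L (A `|` B) = L A + L B :=
  fun A B => lam_add hfg mu GU (A:=A) (B:=B).
have Lsub : forall A B, open A -> open B -> L (A `|` B) <= L A + L B :=
  fun A B => lam_subadd hfg mu GU (A:=A) (B:=B).
have Linvf : forall U, open U -> L (f @^-1` U) = L U :=
  fun U => lam_inv hfg mu GU Ginf (A:=U).
have Linvg : forall U, open U -> L (g @^-1` U) = L U.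
  move=> U oU; have og : open (g @^-1` U) by exact: (proj1 (continuousP g) gc).
  rewrite -(Linvf _ og).
  by congr L; apply/seteqP; split => x /=; rewrite fK.
exists (nuP L0 LT Lge0 Lle Ladd Lsub cpt); split.
- move=> A mA; rewrite !nuPE; apply/eqP; rewrite eq_le; apply/andP; split.
    exact: nus_inv_le gK fc gc Linvf A.
  have {1}-> : A = g @^-1` (f @^-1` A) by apply/seteqP; split => x /=; rewrite gK.
  exact: nus_inv_le fK gc fc Linvg _.
- move=> x; rewrite nuPE; apply/eqP; rewrite eq_le; apply/andP; split; last first.
    exact: (nu_ge0 L0 Lge0).
  have oI := @open_interior _ (proximal_cell f g x).
  apply: (le_trans (nus_le L0 Lge0 (mopen' oI))).
  by rewrite mu0_open // /L (lam_distal hfg GU md x).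
Qed.
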